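(* With $\mathcal I$, $\nu$, $L$, $V_L^*$, $q_{L-1}$, $V_{L-1}^*$ and $\xi$ as defined in the context, for every $\mathbf m\in\mathbb R^{\mathcal I}$ and $a\in\mathcal I$, $$q_{L-1}(\mathbf m,a)=\frac{\xi(a;\mathbf m)}{\sum_{l\in\mathcal I}e^{m[l]}},$$ and consequently $$V_{L-1}^*(\mathbf m)=\frac{1}{\sum_{l\in\mathcal I}e^{m[l]}}\Big[e^{m[x_{[1]}]}+h(\nu)\exp\Big\{\frac{m[x_{[2]}]-\nu m[x_{[1]}]}{1-\nu}\Big\}\Big],$$ where $m[x_{[1]}]\ge m[x_{[2]}]$ are the largest and second-largest entries of $\mathbf m$ (counted with multiplicity).
   Context: $\mathcal I$ is a finite set with $|\mathcal I|\ge2$, $\nu\in(0,1)$, $J(y)=(1-\nu)y+\ln\nu$. $V_L^*(\mathbf m)=\max_{a\in\mathcal I}e^{m[a]}/\sum_{l}e^{m[l]}$; $q_{L-1}(\mathbf m,a)=\int_0^\infty V_L^*(\mathbf m+J(y)\boldsymbol\delta[a])\,f(y\mid\mathbf m,a)\,dy$ with $\boldsymbol\delta[a]$ the indicator vector of $a$ and $f(y\mid\mathbf m,a)=p_a\nu e^{-\nu y}+(1-p_a)e^{-y}$, $p_a=e^{m[a]}/\sum_l e^{m[l]}$; $V_{L-1}^*(\mathbf m)=\max_a q_{L-1}(\mathbf m,a)$. With $M_a=\max_{\hat a\neq a}m[\hat a]$: $\xi(a;\mathbf m)=e^{m[a]}$ if $M_a-m[a]<\ln\nu$, and otherwise $\xi(a;\mathbf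 m)=e^{M_a}+h(\nu)\exp\{\frac{m[a]-\nu M_a}{1-\nu}\}$, where $h(\nu)=\exp\{\frac{\nu\ln\nu}{1-\nu}\}-\exp\{\frac{\ln\nu}{1-\nu}\}$. *)

(* Defs.v *)
From Stdlib Require Import Reals List ClassicalEpsilon.
Import ListNotations.
Open Scope R_scope.

Section Defs.
(* The finite index set I is given by a type with decidable equality and a
   duplicate-free complete enumeration [enum]. *)
Variable I : Type.
Variable eq_dec : forall x y : I, {x = y} + {x <> y}.
Variable enum : list I.

Definition sumI (f : I -> R) : R := fold_right (fun l acc => f l + acc) 0 enum.

(* maximum of f over a nonempty list (0 on the empty list, never used) *)
Definition maxl (f : I -> R) (s : list I) : R :=
  match s with
  | [] => 0
  | x :: r => fold_right (fun y acc => Rmax (f y) acc) (f x) r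
  end.

Definition maxI (f : I -> R) : R := maxl f enum.

Definition shift (m : I -> R) (a : I) (c : R) : I -> R :=
  fun l => if eq_dec l a then m l + c else m l.

Definition J (nu y : R) : R := (1 - nu) * y + ln nu.

Definition pA (m : I -> R) (a : I) : R := exp (m a) / sumI (fun l => exp (m l)).

Definition V_L (m : I -> R) : R :=
  maxI (fun a => exp (m a) / sumI (fun l => exp (m l))).

Definition fdens (nu : R) (m : I -> R) (a : I) (y : R) : R :=
  pA m a * nu * exp (- nu * y) + (1 - pA m a) * exp (- y).

Definition improper_integral_0_inf (f : R -> R) (l : R) : Prop :=
  (forall T, 0 <= T -> inhabited (Riemann_integrable f 0 T)) /\
  (forall eps, eps > 0 -> exists M, forall T (pr : Riemann_integrable f 0 T),
      T >= M -> Rabs (RiemannInt pr - l) < eps).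

Definition Int_0_inf (f : R -> R) : R :=
  epsilon (inhabits 0) (improper_integral_0_inf f).

Definition q_Lm1 (nu : R) (m : I -> R) (a : I) : R :=
  Int_0_inf (fun y => V_L (shift m a (J nu y)) * fdens nu m a y).

Definition V_Lm1 (nu : R) (m : I -> R) : R := maxI (fun a => q_Lm1 nu m a).

Definition M_other (m : I -> R) (a : I) : R :=
  maxl m (filter (fun b => if eq_dec b a then false else true) enum).

Definition h (nu : R) : R :=
  exp (nu * ln nu / (1 - nu)) - exp (ln nu / (1 - nu)).

Definition xi (nu : R) (m : I -> R) (a : I) : R :=
  if Rlt_dec (M_other m a - m a) (ln nu) then exp (m a)
  else exp (M_other m a) + h nu * exp ((m a - nu * M_other m a) / (1 - nu)).

End Defs.

(* Main.v *)
Require Import Defs.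
From Coquelicot Require Import Coquelicot.
From Stdlib Require Import Reals List Lra Lia ClassicalEpsilon FunctionalExtensionality.
Open Scope R_scope.


Section L.
Variable I : Type.

Lemma foldmax_ge (f : I -> R) r v : v <= fold_right (fun y acc => Rmax (f y) acc) v r /\
  forall x, In x r -> f x <= fold_right (fun y acc => Rmax (f y) acc) v r.
Proof.
  induction r as [|z r IH]; simpl.
  - split; [lra| tauto].
  - destruct IH as [H1 H2]. split.
    + eapply Rle_trans; [exact H1| apply Rmax_r].
    + intros x [<-|Hx]; [apply Rmax_l|]. eapply Rle_trans; [apply H2; exact Hx| apply Rmax_r].
Qed.

Lemma foldmax_le (f : I -> R) r v y : v <= y -> (forall x, In x r -> f x <= y) ->
  fold_right (fun y acc => Rmax (f y) acc) v r <= y.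
Proof.
  induction r as [|z r IH]; simpl; intros Hv Hr; auto.
  apply Rmax_lub; auto.
Qed.

Lemma maxl_char (f : I -> R) s y : (exists x, In x s /\ f x = y) ->
  (forall x, In x s -> f x <= y) -> maxl I f s = y.
Proof.
  intros [x [Hx Hfx]] Hub. destruct s as [|x0 r]; [destruct Hx|].
  simpl. apply Rle_antisym.
  - apply foldmax_le; [apply Hub; simpl; auto| intros; apply Hub; simpl; auto].
  - destruct (foldmax_ge f r (f x0)) as [H1 H2]. simpl in Hx. destruct Hx as [<-|Hx].
    + rewrite <- Hfx; auto.
    + rewrite <- Hfx; auto.
Qed.

Lemma maxl_ub (f : I -> R) s x : In x s -> f x <= maxl I f s.
Proof.
  intros Hx. destruct s as [|x0 r]; [destruct Hx|]. simpl.
  destruct (foldmax_ge f r (f x0)) as [H1 H2]. destruct Hx as [<-|Hx]; auto.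
Qed.

Lemma maxl_in (f : I -> R) s : s <> nil -> exists x, In x s /\ maxl I f s = f x.
Proof.
  intros Hs. destruct s as [|x0 r]; [congruence|]. simpl. clear Hs.
  induction r as [|z r IH]; simpl.
  - exists x0; auto.
  - destruct IH as [x [Hx Hm]]. unfold Rmax at 1. destruct Rle_dec.
    + exists x. split; [destruct Hx; auto| exact Hm].
    + exists z. auto.
Qed.

Lemma sum_shift (enum : list I) (eq_dec : forall x y : I, {x = y} + {x <> y}) f g a :
  NoDup enum -> In a enum -> (forall l, l <> a -> g l = f l) ->
  sumI I enum g = sumI I enum f - f a + g a.
Proof.
  unfold sumI. intros Hnd. induction Hnd as [|x l Hx Hnd IH]; simpl; [tauto|].
  intros [<-|Ha] Hg.
  - assert (E : fold_right (fun l0 acc => g l0 + acc) 0 l = fold_right (fun l0 acc => f l0 + acc) 0 l).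
    { clear IH Hnd. induction l as [|z l IHl]; simpl; auto.
      rewrite Hg. rewrite IHl; auto. intro; apply Hx; simpl; auto. intros ->; apply Hx; simpl; auto. }
    rewrite E; ring.
  - rewrite (IH Ha Hg), Hg; [ring|]. intros ->; auto.
Qed.

Lemma sum_pos (enum : list I) f : enum <> nil -> (forall l, 0 < f l) -> 0 < sumI I enum f.
Proof.
  unfold sumI. intros Hn Hf. destruct enum as [|x l]; [congruence|]. simpl. clear Hn.
  assert (0 <= fold_right (fun l0 acc => f l0 + acc) 0 l).
  { induction l; simpl; [lra|]. specialize (Hf a). lra. }
  specialize (Hf x). lra.
Qed.
End L.

Lemma exp_int (c k S a b : R) : k <> 0 -> S <> 0 ->
  is_RInt (fun y => exp (c - k*y) / S) a b ((exp (c - k*a) - exp (c - k*b)) / (k*S)).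
Proof.
  intros Hk HS.
  assert (H := is_RInt_derive (fun y => - exp (c - k*y) / (k*S)) (fun y => exp (c - k*y) / S) a b).
  replace ((exp (c - k*a) - exp (c - k*b)) / (k*S)) with
    (minus (- exp (c - k*b) / (k*S)) (- exp (c - k*a) / (k*S))).
  - apply H.
    + intros x _. auto_derive; [trivial|]. replace (c + - (k*x)) with (c - k*x) by ring. field; auto.
    + intros x _. apply (ex_derive_continuous (K := R_AbsRing) (V := R_NormedModule) (fun y => exp (c - k*y) / S)). auto_derive. trivial.
  - unfold minus, plus, opp; simpl. field; auto.
Qed.

Lemma improper_unique f l1 l2 : improper_integral_0_inf f l1 -> improper_integral_0_inf f l2 -> l1 = l2.
Proof.
  intros [H0 H1] [_ H2]. destruct (Req_dec l1 l2) as [|Hne]; auto. exfalso.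
  set (e := Rabs (l1 - l2) / 2).
  assert (He : e > 0). { unfold e. assert (Rabs (l1 - l2) > 0) by (apply Rabs_pos_lt; lra). lra. }
  destruct (H1 e He) as [M1 HM1]. destruct (H2 e He) as [M2 HM2].
  set (T := Rmax 0 (Rmax M1 M2)).
  assert (HT0 : 0 <= T) by apply Rmax_l.
  assert (HT1 : T >= M1). { unfold T. apply Rle_ge. eapply Rle_trans; [|apply Rmax_r]. apply Rmax_l. }
  assert (HT2 : T >= M2). { unfold T. apply Rle_ge. eapply Rle_trans; [|apply Rmax_r]. apply Rmax_r. }
  destruct (H0 T HT0) as [pr].
  specialize (HM1 T pr HT1). specialize (HM2 T pr HT2).
  assert (Rabs (l1 - l2) <= Rabs (RiemannInt pr - l1) + Rabs (RiemannInt pr - l2)).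
  { replace (l1 - l2) with (-(RiemannInt pr - l1) + (RiemannInt pr - l2)) by ring.
    eapply Rle_trans; [apply Rabs_triang|]. rewrite Rabs_Ropp. lra. }
  unfold e in *. lra.
Qed.

Lemma Int_0_inf_eq f l : improper_integral_0_inf f l -> Int_0_inf f = l.
Proof.
  intros H. unfold Int_0_inf. apply (improper_unique f).
  - apply epsilon_spec. exists l; exact H.
  - exact H.
Qed.

Lemma improper_of f l nu C T0 : 0 < nu -> 0 <= C ->
  (forall T, 0 <= T -> ex_RInt f 0 T) ->
  (forall T, T >= T0 -> is_RInt f 0 T (l - C * exp (- nu * T))) ->
  improper_integral_0_inf f l.
Proof.
  intros Hnu HC Hex Hint. split.
  - intros T HT. constructor. apply ex_RInt_Reals_0. auto.
  - intros eps Heps. exists (Rmax T0 (ln ((C+1)/eps) / nu)). intros T pr HT.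
    assert (HT0 : T >= T0). { apply Rle_ge. apply Rle_trans with (Rmax T0 (ln ((C+1)/eps) / nu)); [apply Rmax_l| lra]. }
    assert (HT1 : ln ((C+1)/eps) / nu <= T). { apply Rle_trans with (Rmax T0 (ln ((C+1)/eps) / nu)); [apply Rmax_r| lra]. }
    rewrite <- RInt_Reals. rewrite (is_RInt_unique _ _ _ _ (Hint T HT0)).
    replace (l - C * exp (- nu * T) - l) with (- (C * exp (- nu * T))) by ring.
    rewrite Rabs_Ropp. rewrite Rabs_pos_eq by (apply Rmult_le_pos; [lra| left; apply exp_pos]).
    assert (Hx : exp (- nu * T) <= eps / (C + 1)).
    { replace (eps / (C+1)) with (exp (- ln ((C+1)/eps))).
      - destruct (Req_dec (- nu * T) (- ln ((C+1)/eps))) as [E|E]; [rewrite E; apply Rle_refl|].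
        left. apply exp_increasing.
        apply Rmult_le_compat_r with (r := nu) in HT1; [|lra].
        unfold Rdiv in HT1. rewrite Rmult_assoc, Rinv_l, Rmult_1_r in HT1 by lra. lra.
      - rewrite exp_Ropp, exp_ln. field. lra.
        apply Rdiv_lt_0_compat; lra. }
    apply Rle_lt_trans with (C * (eps / (C+1))).
    + apply Rmult_le_compat_l; auto.
    + apply Rlt_le_trans with ((C+1) * (eps / (C+1))); [apply Rmult_lt_compat_r; [apply Rdiv_lt_0_compat|]; lra|].
      right. field. lra.
Qed.

Lemma exp_le a b : a <= b -> exp a <= exp b.
Proof. intros [H|H]; [left; apply exp_increasing; auto| subst; lra]. Qed.

Lemma ext_on (f g : R -> R) a b (l : R) : a <= b -> (forall x, a < x < b -> f x = g x) -> is_RInt g a b l -> is_RInt f a b l.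
Proof.
  intros Hab He H. apply is_RInt_ext with g; auto.
  intros x. rewrite Rmin_left, Rmax_right by lra. intros Hx; symmetry; auto.
Qed.

Definition gfun (M K S nu y : R) := Rmax (exp (M - y)) (exp (K - nu*y)) / S.

Section G.
Variables M K S nu : R.
Hypothesis Hnu : 0 < nu < 1.
Hypothesis HS : 0 < S.
Let y0 := (M - K) / (1 - nu).

Lemma g_left y : y <= y0 -> gfun M K S nu y = exp (M - y) / S.
Proof.
  intros Hy. unfold gfun. rewrite Rmax_left; auto. apply exp_le.
  unfold y0 in Hy. apply Rmult_le_compat_r with (r := 1 - nu) in Hy; [|lra].
  unfold Rdiv in Hy. rewrite Rmult_assoc, Rinv_l, Rmult_1_r in Hy by lra. nra.
Qed.

Lemma g_right y : y0 <= y -> gfun M K S nu y = exp (K - nu*y) / S.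
Proof.
  intros Hy. unfold gfun. rewrite Rmax_right; auto. apply exp_le.
  unfold y0 in Hy. apply Rmult_le_compat_r with (r := 1 - nu) in Hy; [|lra].
  unfold Rdiv in Hy. rewrite Rmult_assoc, Rinv_l, Rmult_1_r in Hy by lra. nra.
Qed.

Lemma intA a b : is_RInt (fun y => exp (M - y) / S) a b ((exp (M - a) - exp (M - b)) / S).
Proof.
  assert (H := exp_int M 1 S a b ltac:(lra) ltac:(lra)).
  apply is_RInt_ext with (f := fun y => exp (M - 1*y) / S).
  - intros; rewrite Rmult_1_l; auto.
  - replace ((exp (M - a) - exp (M - b)) / S) with ((exp (M - 1*a) - exp (M - 1*b)) / (1*S)); [exact H|].
    rewrite !Rmult_1_l; auto.
Qed.

Lemma intB a b : is_RInt (fun y => exp (K - nu*y) / S) a b ((exp (K - nu*a) - exp (K - nu*b)) / (nu*S)).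
Proof. apply exp_int; lra. Qed.

Definition Lval := (if Rlt_dec y0 0 then exp K / nu else exp M - exp (M - y0) + exp (K - nu*y0) / nu) / S.

Lemma g_ex T : 0 <= T -> ex_RInt (gfun M K S nu) 0 T.
Proof.
  intros HT. destruct (Rle_dec T y0) as [H|H].
  - eexists. eapply ext_on; [exact HT| |apply intA]. intros; apply g_left; lra.
  - destruct (Rlt_dec y0 0) as [H0|H0].
    + eexists. eapply ext_on; [exact HT| |apply intB]. intros; apply g_right; lra.
    + eexists. eapply is_RInt_Chasles with (b := y0).
      * eapply ext_on; [lra| |apply intA]. intros; apply g_left; lra.
      * eapply ext_on; [lra| |apply intB]. intros; apply g_right; lra.
Qed.

Lemma g_int T : T >= Rmax 0 y0 -> is_RInt (gfun M K S nu) 0 T (Lval - (exp K / nu) / S * exp (- nu * T)).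
Proof.
  intros HT. assert (H0T : 0 <= T) by (apply Rle_trans with (Rmax 0 y0); [apply Rmax_l|lra]).
  assert (HyT : y0 <= T) by (apply Rle_trans with (Rmax 0 y0); [apply Rmax_r|lra]).
  unfold Lval. destruct (Rlt_dec y0 0) as [H0|H0].
  - eapply ext_on; [exact H0T| intros; apply g_right; lra|].
    replace ((exp K / nu / S) - exp K / nu / S * exp (- nu * T)) with
      ((exp (K - nu*0) - exp (K - nu*T)) / (nu*S)); [apply intB|].
    replace (K - nu*0) with K by ring. unfold Rminus. rewrite exp_plus.
    replace (- (nu*T)) with (- nu * T) by ring. field; lra.
  - replace ((exp M - exp (M - y0) + exp (K - nu * y0) / nu) / S - exp K / nu / S * exp (- nu * T))
      with (plus ((exp (M - 0) - exp (M - y0)) / S) ((exp (K - nu*y0) - exp (K - nu*T)) / (nu*S))).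
    + apply (is_RInt_Chasles (V := R_NormedModule) _ 0 y0 T).
      * eapply ext_on; [lra| |apply intA]. intros; apply g_left; lra.
      * eapply ext_on; [lra| |apply intB]. intros; apply g_right; lra.
    + unfold plus; simpl. replace (M - 0) with M by ring.
      replace (K - nu*T) with (K + (- nu * T)) by ring. rewrite exp_plus. field; lra.
Qed.

Lemma g_improper : improper_integral_0_inf (gfun M K S nu) Lval.
Proof.
  apply improper_of with (nu := nu) (C := exp K / nu / S) (T0 := Rmax 0 y0).
  - lra.
  - left. apply Rdiv_lt_0_compat; [apply Rdiv_lt_0_compat|]; try lra. apply exp_pos.
  - apply g_ex.
  - apply g_int.
Qed.
End G.

Section K.
Variables k h : R.
Hypothesis Hk : 1 < k.
Hypothesis Hh : 0 <= h.

Definition Gk d := exp d + h * exp (-(k-1)*d) - 1 - h * exp (k*d).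
Definition Gp d := exp d - h*(k-1)*exp (-(k-1)*d) - h*k*exp (k*d).
Definition psi d := h*(k-1)*exp (-k*d) + h*k*exp ((k-1)*d).
Definition psip d := h*k*(k-1)*(exp ((k-1)*d) - exp (-k*d)).

Lemma Gk_der d : derivable_pt_lim Gk d (Gp d).
Proof.
  apply is_derive_Reals. unfold Gk, Gp. auto_derive; trivial. ring.
Qed.

Lemma psi_der d : derivable_pt_lim psi d (psip d).
Proof.
  apply is_derive_Reals. unfold psi, psip. auto_derive; trivial. ring.
Qed.

Lemma Gp_psi d : Gp d = exp d * (1 - psi d).
Proof.
  unfold Gp, psi.
  replace (-(k-1)*d) with (d + -k*d) by ring. replace (k*d) with (d + (k-1)*d) by ring.
  rewrite !exp_plus. ring.
Qed.

Lemma psi_mono a b : 0 <= a -> a < b -> psi a <= psi b.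
Proof.
  intros Ha Hab. destruct (MVT_cor2 psi psip a b Hab (fun c _ => psi_der c)) as [c [Hc Hc']].
  assert (0 <= psip c).
  { unfold psip. apply Rmult_le_pos; [apply Rmult_le_pos; [apply Rmult_le_pos|]; lra|].
    assert (exp (-k*c) <= exp ((k-1)*c)).
    { destruct (Req_dec (-k*c) ((k-1)*c)) as [E|E]; [rewrite E; lra|].
      left; apply exp_increasing. nra. }
    lra. }
  nra.
Qed.

Lemma Gk0 : Gk 0 = 0.
Proof. unfold Gk. rewrite !Rmult_0_r, exp_0. ring. Qed.

Lemma keyineq c d : 0 <= Gk c -> 0 <= d <= c -> 0 <= Gk d.
Proof.
  intros Hc Hd. destruct (Rle_lt_dec 0 (Gk d)) as [|Hneg]; auto. exfalso.
  assert (Hd0 : 0 < d). { destruct (Req_dec d 0) as [->|]; [rewrite Gk0 in Hneg; lra| lra]. }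
  assert (Hdc : d < c). { destruct (Req_dec d c) as [->|]; [lra| lra]. }
  destruct (MVT_cor2 Gk Gp 0 d Hd0 (fun c _ => Gk_der c)) as [c1 [E1 H1]].
  destruct (MVT_cor2 Gk Gp d c Hdc (fun c _ => Gk_der c)) as [c2 [E2 H2]].
  rewrite Gk0 in E1.
  assert (Gp c1 < 0) by nra. assert (0 < Gp c2) by nra.
  rewrite Gp_psi in *. assert (X1 := exp_pos c1). assert (X2 := exp_pos c2).
  assert (1 < psi c1) by nra. assert (psi c2 < 1) by nra.
  assert (psi c1 <= psi c2) by (apply psi_mono; lra). lra.
Qed.
End K.

Section Main.
Variable I : Type.
Variable eq_dec : forall x y : I, {x = y} + {x <> y}.
Variable enum : list I.
Hypothesis Hnodup : NoDup enum.
Hypothesis Hcomplete : forall x : I, In x enum.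
Hypothesis Hcard : (2 <= length enum)%nat.
Variable nu : R.
Hypothesis Hnu : 0 < nu < 1.

Lemma other_exists (a : I) : exists b : I, b <> a.
Proof.
  destruct enum as [|x [|y r]]; simpl in Hcard; try lia.
  inversion Hnodup; subst. assert (x <> y) by (intros ->; apply H1; simpl; auto).
  destruct (eq_dec x a) as [->|]; [exists y; auto| exists x; auto].
Qed.

Lemma M_other_val m a v : (exists x, x <> a /\ m x = v) -> (forall x, x <> a -> m x <= v) ->
  M_other I eq_dec enum m a = v.
Proof.
  intros [x [Hx Hv]] Hub. unfold M_other. apply maxl_char.
  - exists x. split; auto. apply filter_In. split; auto. destruct (eq_dec x a); congruence.
  - intros y Hy. apply filter_In in Hy. destruct Hy as [_ Hy]. destruct (eq_dec y a); [discriminate|]. auto.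
Qed.

Lemma M_other_prop m a : (exists x, x <> a /\ m x = M_other I eq_dec enum m a) /\
  (forall x, x <> a -> m x <= M_other I eq_dec enum m a).
Proof.
  split.
  - destruct (maxl_in I m (filter (fun b => if eq_dec b a then false else true) enum)) as [x [Hx Hm]].
    + destruct (other_exists a) as [b Hb]. intros E. assert (In b (filter (fun b => if eq_dec b a then false else true) enum)).
      { apply filter_In. split; auto. destruct (eq_dec b a); congruence. }
      rewrite E in H; destruct H.
    + exists x. apply filter_In in Hx. destruct Hx as [_ Hx]. destruct (eq_dec x a); [discriminate|].
      split; auto. unfold M_other. auto.
  - intros x Hx. unfold M_other. apply maxl_ub. apply filter_In. split; auto. destruct (eq_dec x a); congruence.
Qed.

Lemma enum_ne : enum <> nil.
Proof. intros E. rewrite E in Hcard. simpl in Hcard. lia. Qed.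

Lemma integrand_eq m a y :
  V_L I enum (shift I eq_dec m a (J nu y)) * fdens I enum nu m a y =
  gfun (M_other I eq_dec enum m a) (m a + ln nu) (sumI I enum (fun l => exp (m l))) nu y.
Proof.
  set (Mo := M_other I eq_dec enum m a).
  set (S := sumI I enum (fun l => exp (m l))).
  set (c := J nu y).
  set (m' := shift I eq_dec m a c).
  assert (HS : 0 < S) by (apply sum_pos; [apply enum_ne| intros; apply exp_pos]).
  assert (Hma : m' a = m a + c) by (unfold m', shift; destruct (eq_dec a a); congruence).
  assert (Hmo : forall l, l <> a -> m' l = m l) by (intros l Hl; unfold m', shift; destruct (eq_dec l a); congruence).
  assert (HS' : sumI I enum (fun l => exp (m' l)) = S - exp (m a) + exp (m a + c)).
  { unfold S. rewrite (sum_shift I enum eq_dec (fun l => exp (m l)) (fun l => exp (m' l)) a Hnodup (Hcomplete a)).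
    - rewrite Hma; auto.
    - intros l Hl; rewrite Hmo; auto. }
  set (S' := S - exp (m a) + exp (m a + c)) in HS'.
  assert (HS'p : 0 < S') by (rewrite <- HS'; apply sum_pos; [apply enum_ne| intros; apply exp_pos]).
  destruct (M_other_prop m a) as [[x [Hxa Hxm]] Hub]. fold Mo in Hxm, Hub.
  assert (HV : V_L I enum m' = Rmax (exp (m a + c)) (exp Mo) / S').
  { unfold V_L, maxI. rewrite HS'. apply maxl_char.
    - destruct (Rle_dec (exp Mo) (exp (m a + c))) as [H|H].
      + exists a. split; auto. rewrite Rmax_left by auto. rewrite Hma. auto.
      + exists x. split; auto. rewrite Rmax_right by lra. rewrite Hmo, Hxm; auto.
    - intros b _. apply Rmult_le_compat_r; [left; apply Rinv_0_lt_compat; auto|].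
      destruct (eq_dec b a) as [->|Hb]; [rewrite Hma; apply Rmax_l|].
      rewrite Hmo by auto. eapply Rle_trans; [|apply Rmax_r]. apply exp_le. auto. }
  fold m'. rewrite HV. unfold gfun, fdens, pA. fold S.
  set (E := exp (m a)). set (X := exp ((1-nu)*y)). set (Z := exp (-y)).
  assert (e1 : exp (m a + c) = E * nu * X).
  { unfold c, J, E, X. rewrite Rplus_comm, exp_plus, exp_plus, exp_ln by lra. ring. }
  assert (e2 : exp (- nu * y) = Z * X).
  { unfold Z, X. rewrite <- exp_plus. f_equal. ring. }
  assert (e3 : exp (Mo - y) = exp Mo * Z).
  { unfold Z. rewrite <- exp_plus. f_equal. }
  assert (e4 : exp (m a + ln nu - nu * y) = E * nu * X * Z).
  { rewrite <- e1. unfold Z. rewrite <- exp_plus. f_equal. unfold c, J. ring. }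
  rewrite e3, e4. unfold S' in *. rewrite e1 in *.
  rewrite (Rmax_comm (exp Mo * Z)), <- Rmax_mult by (left; apply exp_pos).
  rewrite e2. fold E. assert (S - E + E*nu*X <> 0) by (unfold E in *; lra). field. split; lra.
Qed.

Lemma h_nonneg : 0 <= h nu.
Proof.
  unfold h. assert (ln nu < 0) by (rewrite <- ln_1; apply ln_increasing; lra).
  assert (exp (ln nu / (1 - nu)) <= exp (nu * ln nu / (1 - nu))); [|lra].
  apply exp_le. unfold Rdiv. apply Rmult_le_compat_r; [left; apply Rinv_0_lt_compat; lra| nra].
Qed.

Lemma part1 m a : q_Lm1 I eq_dec enum nu m a = xi I eq_dec enum nu m a / sumI I enum (fun l => exp (m l)).
Proof.
  unfold q_Lm1.
  set (Mo := M_other I eq_dec enum m a).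
  set (S := sumI I enum (fun l => exp (m l))).
  assert (HS : 0 < S) by (apply sum_pos; [apply enum_ne| intros; apply exp_pos]).
  rewrite (functional_extensionality _ _ (integrand_eq m a)). fold Mo S.
  rewrite (Int_0_inf_eq _ _ (g_improper Mo (m a + ln nu) S nu Hnu HS)).
  unfold Lval, xi. fold Mo.
  destruct (Rlt_dec ((Mo - (m a + ln nu)) / (1 - nu)) 0) as [H1|H1];
  destruct (Rlt_dec (Mo - m a) (ln nu)) as [H2|H2].
  - rewrite exp_plus, exp_ln by lra. field. split; lra.
  - exfalso. apply H2. assert (Mo - (m a + ln nu) < 0); [|lra].
    unfold Rdiv in H1. assert (0 < / (1-nu)) by (apply Rinv_0_lt_compat; lra). nra.
  - exfalso. apply H1. unfold Rdiv. assert (0 < / (1-nu)) by (apply Rinv_0_lt_compat; lra). nra.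
  - f_equal. unfold h. rewrite Rmult_minus_distr_r, <- !exp_plus.
    assert (E1 : exp (m a + ln nu - nu * ((Mo - (m a + ln nu)) / (1 - nu))) / nu =
                 exp (nu * ln nu / (1 - nu) + (m a - nu * Mo) / (1 - nu))).
    { replace (m a + ln nu - nu * ((Mo - (m a + ln nu)) / (1 - nu))) with
        (ln nu + (nu * ln nu / (1 - nu) + (m a - nu * Mo) / (1 - nu))) by (field; lra).
      rewrite exp_plus, exp_ln by lra. field. lra. }
    assert (E2 : Mo - (Mo - (m a + ln nu)) / (1 - nu) = ln nu / (1 - nu) + (m a - nu * Mo) / (1 - nu))
      by (field; lra).
    rewrite E1, E2. ring.
Qed.
End Main.

Lemma keyfinal (nu p d : R) : 0 < nu < 1 -> 0 <= d <= - ln nu ->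
  exp p + h nu * exp ((p + d - nu * p) / (1 - nu)) <= exp (p + d) + h nu * exp ((p - nu * (p + d)) / (1 - nu)).
Proof.
  intros Hnu Hd. set (k := 1 / (1 - nu)).
  assert (Hk : 1 < k). { unfold k, Rdiv. rewrite Rmult_1_l. rewrite <- Rinv_1 at 1.
    apply Rinv_lt_contravar; nra. }
  assert (Hh := h_nonneg nu Hnu).
  set (c := - ln nu).
  set (P := exp (nu * ln nu / (1 - nu))).
  assert (HP : 0 < P) by apply exp_pos.
  assert (e1 : exp (-(k-1)*c) = P) by (unfold P, c, k; f_equal; field; lra).
  assert (e2 : exp (ln nu / (1 - nu)) = nu * P).
  { unfold P. replace (ln nu / (1 - nu)) with (ln nu + nu * ln nu / (1 - nu)) by (field; lra).
    rewrite exp_plus, exp_ln; lra. }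
  assert (e3 : exp (k*c) = / (nu * P)).
  { rewrite <- e2, <- exp_Ropp. f_equal. unfold k, c. field. lra. }
  assert (e4 : exp c = / nu) by (unfold c; rewrite exp_Ropp, exp_ln; lra).
  assert (Gc : 0 <= Gk k (h nu) c).
  { unfold Gk. rewrite e1, e3, e4. unfold h. rewrite e2. fold P.
    replace (/ nu + (P - nu * P) * P - 1 - (P - nu * P) * / (nu * P)) with ((1 - nu) * P * P)
      by (field; split; lra).
    apply Rmult_le_pos; [apply Rmult_le_pos|]; lra. }
  assert (Gd := keyineq k (h nu) Hk Hh c d Gc Hd). unfold Gk in Gd.
  replace ((p + d - nu * p) / (1 - nu)) with (p + k * d) by (unfold k; field; lra).
  replace ((p - nu * (p + d)) / (1 - nu)) with (p + -(k-1)*d) by (unfold k; field; lra).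
  rewrite !exp_plus. assert (Hep := exp_pos p). nra.
Qed.

Section Main2.
Variable I : Type.
Variable eq_dec : forall x y : I, {x = y} + {x <> y}.
Variable enum : list I.
Hypothesis Hnodup : NoDup enum.
Hypothesis Hcomplete : forall x : I, In x enum.
Hypothesis Hcard : (2 <= length enum)%nat.
Variable nu : R.
Hypothesis Hnu : 0 < nu < 1.

Lemma part2 (m : I -> R) (x1 x2 : I) :
      x1 <> x2 ->
      (forall b, m b <= m x1) ->
      (forall b, b <> x1 -> m b <= m x2) ->
      V_Lm1 I eq_dec enum nu m =
      / sumI I enum (fun l => exp (m l)) *
      (exp (m x1) + h nu * exp ((m x2 - nu * m x1) / (1 - nu))).
Proof.
  intros H12 Hx1 Hx2.
  set (S := sumI I enum (fun l => exp (m l))).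
  assert (HS : 0 < S) by (apply sum_pos; [apply (enum_ne I enum Hcard)| intros; apply exp_pos]).
  assert (Hln : ln nu < 0) by (rewrite <- ln_1; apply ln_increasing; lra).
  assert (Hh := h_nonneg nu Hnu).
  assert (Mb : forall b, b <> x1 -> M_other I eq_dec enum m b = m x1).
  { intros b Hb. apply (M_other_val I eq_dec enum Hcomplete). exists x1; split; auto.
    intros x _; auto. }
  assert (M1 : M_other I eq_dec enum m x1 = m x2).
  { apply (M_other_val I eq_dec enum Hcomplete). exists x2; split; auto. auto. }
  assert (Xb : forall b, b <> x1 -> xi I eq_dec enum nu m b = exp (m x1) + h nu * exp ((m b - nu * m x1) / (1 - nu))).
  { intros b Hb. unfold xi. rewrite Mb by auto. destruct Rlt_dec as [H|H]; [|auto].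
    exfalso. specialize (Hx1 b). lra. }
  unfold V_Lm1, maxI. apply maxl_char.
  - exists x2. split; auto. rewrite (part1 I eq_dec enum Hnodup Hcomplete Hcard nu Hnu).
    rewrite Xb by auto. fold S. unfold Rdiv. ring.
  - intros b _. rewrite (part1 I eq_dec enum Hnodup Hcomplete Hcard nu Hnu). fold S.
    unfold Rdiv. rewrite Rmult_comm. apply Rmult_le_compat_l; [left; apply Rinv_0_lt_compat; auto|].
    destruct (eq_dec b x1) as [->|Hb].
    + unfold xi. rewrite M1. destruct Rlt_dec as [H|H].
      * assert (0 <= h nu * exp ((m x2 - nu * m x1) / (1 - nu))) by (apply Rmult_le_pos; [auto| left; apply exp_pos]). lra.
      * assert (H0 := keyfinal nu (m x2) (m x1 - m x2) Hnu ltac:(split; [specialize (Hx2 x2); specialize (Hx1 x2); lra| lra])).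
        replace (m x2 + (m x1 - m x2)) with (m x1) in H0 by ring. exact H0.
    + rewrite Xb by auto. apply Rplus_le_compat_l. apply Rmult_le_compat_l; auto. apply exp_le.
      unfold Rdiv. apply Rmult_le_compat_r; [left; apply Rinv_0_lt_compat; lra|]. specialize (Hx2 b Hb). lra.
Qed.
End Main2.

Theorem mainTheorem4 (I : Type) (eq_dec : forall x y : I, {x = y} + {x <> y})
  (enum : list I) (Hnodup : NoDup enum) (Hcomplete : forall x : I, In x enum)
  (Hcard : (2 <= length enum)%nat) (nu : R) (Hnu : 0 < nu < 1) :
  (forall (m : I -> R) (a : I),
      q_Lm1 I eq_dec enum nu m a =
      xi I eq_dec enum nu m a / sumI I enum (fun l => exp (m l))) /\
  (forall (m : I -> R) (x1 x2 : I),
      x1 <> x2 ->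
      (forall b, m b <= m x1) ->
      (forall b, b <> x1 -> m b <= m x2) ->
      V_Lm1 I eq_dec enum nu m =
      / sumI I enum (fun l => exp (m l)) *
      (exp (m x1) + h nu * exp ((m x2 - nu * m x1) / (1 - nu)))).
Proof.
  split.
  - apply part1; auto.
  - apply part2; auto.
Qed.
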